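(* Let $k\in\mathbb{N}$ and let $G$ be a graph on $n$ vertices with minimum degree $\delta=\delta(G)>\frac{(k-1)n}{k}$. Then (i) each $K_{k+1}$-component $C$ of $G$ satisfies $|C|>\delta$; (ii) for distinct $K_{k+1}$-components $C$ and $C'$ there are no edges between $\mathrm{ext}(C)$ and $\mathrm{ext}(C')$; (iii) for each $K_{k+1}$-component $C$, each copy $u_1\dots u_{k-1}$ of $K_{k-1}$ of $C$, and $U:=\{v: u_1\dots u_{k-1}v\in C\}$, we have $\delta(G[U])\geq k\delta-(k-1)n$ and $|U|\geq k\delta-(k-1)n+1$.
   Context: A $K_{k+1}$-walk in $G$ is a sequence of copies of $K_k$ in which consecutive copies lie in a common copy of $K_{k+1}$; its endpoints are then $K_{k+1}$-connected; the equivalence classes of copies of $K_k$ are the $K_{k+1}$-components. The vertices of a component $C$ are the vertices of the copies of $K_k$ in $C$, and $|C|$ is their number. A copy of $K_{k-1}$ is a copy of $K_{k-1}$ of $C$ if it extends to a copy of $K_k$ in $C$; $u_1\dots u_{k-1}v\in C$ means the copy of $K_k$ on these vertices lies in $C$. $\mathrm{ext}(C)$ (the exterior of $C$) is the set of vertices of $C$ that are vertices of no other $K_{k+1}$-component. *)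

(* Defs.v *)
(* A graph is a symmetric irreflexive relation e on a finType T. *)
From mathcomp Require Import all_boot all_order.
Set Implicit Arguments. Unset Strict Implicit. Unset Printing Implicit Defensive.

Section Defs.
Variables (T : finType) (e : rel T).

Definition clique (A : {set T}) : bool :=
  [forall x in A, forall y in A, (x != y) ==> e x y].

Definition kcopy (k : nat) (A : {set T}) : bool := clique A && (#|A| == k).

Definition kstep (k : nat) (A B : {set T}) : bool :=
  [&& kcopy k A, kcopy k B &
      [exists D : {set T}, kcopy k.+1 D && ((A :|: B) \subset D)]].

Definition kconn (k : nat) (A B : {set T}) : bool :=
  [&& kcopy k A, kcopy k B & connect (kstep k) A B].

(* C is a K_{k+1}-component: an equivalence class of copies of K_k *)
Definition is_component (k : nat) (C : {set {set T}}) : bool :=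
  [exists A : {set T}, kcopy k A && (C == [set B | kconn k A B])].

Definition cverts (C : {set {set T}}) : {set T} := \bigcup_(A in C) A.

Definition ext (k : nat) (C : {set {set T}}) : {set T} :=
  [set v in cverts C | [forall C' : {set {set T}},
      (is_component k C' && (C' != C)) ==> (v \notin cverts C')]].

(* minimum degree of the induced subgraph G[U] (for U empty, value #|U| = 0) *)
Definition mindeg_on (U : {set T}) : nat :=
  \big[minn/#|U|]_(v in U) #|[set u in U | e v u]|.

Definition mindeg : nat := mindeg_on [set: T].

End Defs.

(* Main.v *)
Require Import Defs.
From mathcomp Require Import all_boot all_order.
From mathcomp Require Import zify.
Set Implicit Arguments. Unset Strict Implicit. Unset Printing Implicit Defensive.

Section Aux.
Variables (T : finType) (e : rel T).
Hypothesis e_sym : symmetric e.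
Hypothesis e_irr : irreflexive e.

Lemma cliqueP (A : {set T}) :
  reflect (forall x y, x \in A -> y \in A -> x != y -> e x y) (clique e A).
Proof.
apply: (iffP forall_inP) => [H x y xA yA nxy | H x xA].
  by move: (H x xA) => /forall_inP /(_ y yA) /implyP; apply.
by apply/forall_inP => y yA; apply/implyP; apply: H.
Qed.

Lemma clique_sub (A B : {set T}) : B \subset A -> clique e A -> clique e B.
Proof.
move=> /subsetP sBA /cliqueP cA; apply/cliqueP => x y xB yB; apply: cA; exact: sBA.
Qed.

Lemma clique_add (A : {set T}) v :
  clique e A -> (forall a, a \in A -> e v a) -> clique e (v |: A).
Proof.
move=> /cliqueP cA hv; apply/cliqueP => x y; rewrite !inE.
case/orP=> [/eqP->|xA]; case/orP=> [/eqP->|yA] //.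
- by rewrite eqxx.
- by move=> _; apply: hv.
- by move=> _; rewrite e_sym; apply: hv.
- by apply: cA.
Qed.

Lemma notin_adj (A : {set T}) v : (forall a, a \in A -> e v a) -> v \notin A.
Proof. by move=> h; apply/negP => /h; rewrite e_irr. Qed.

Lemma card_add (A : {set T}) v : v \notin A -> #|v |: A| = #|A|.+1.
Proof. by move=> vA; rewrite cardsU1 vA. Qed.

Lemma exists_sub (X Y : {set T}) m :
  X \subset Y -> #|X| <= m -> m <= #|Y| ->
  exists D : {set T}, [/\ X \subset D, D \subset Y & #|D| = m].
Proof.
move=> sXY; move Hd: (m - #|X|) => d; elim: d X sXY Hd => [|d IH] X sXY Hd hX hY.
  by exists X; split => //; apply/eqP; rewrite eqn_leq hX /=; lia.
have [y] : exists y, y \in Y :\: X.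
  by apply/set0Pn; rewrite -card_gt0 cardsD (setIidPr sXY); lia.
rewrite inE => /andP [yX yY].
have sXY' : y |: X \subset Y by rewrite subUset sub1set yY.
have := IH _ sXY'; rewrite card_add //.
move=> /(_ ltac:(lia) ltac:(lia) hY) [D [h1 h2 h3]].
exists D; split => //; apply: subset_trans h1; exact: subsetUr.
Qed.

Lemma kstep_sym k : symmetric (kstep e k).
Proof. by move=> A B; rewrite /kstep setUC andbCA. Qed.

Lemma conn_sym k A B : connect (kstep e k) A B = connect (kstep e k) B A.
Proof. by apply: sym_connect_sym; apply: kstep_sym. Qed.

Lemma kconn_step k A B B' : kconn e k A B -> kstep e k B B' -> kconn e k A B'.
Proof.
case/and3P=> hA hB hc hs; apply/and3P; split => //.
  by case/and3P: hs.
by apply: connect_trans hc (connect1 hs).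
Qed.

Lemma kconn_trans k A B X : kconn e k A B -> kconn e k B X -> kconn e k A X.
Proof.
case/and3P=> hA hB hc /and3P [_ hX hc']; apply/and3P; split => //.
exact: connect_trans hc hc'.
Qed.

Lemma kconn_sym k A B : kconn e k A B -> kconn e k B A.
Proof. by case/and3P=> hA hB hc; apply/and3P; split => //; rewrite conn_sym. Qed.

Lemma comp_eq k A B : kconn e k A B ->
  [set X | kconn e k A X] = [set X | kconn e k B X].
Proof.
move=> hAB; apply/setP => X; rewrite !inE; apply/idP/idP => h.
  exact: kconn_trans (kconn_sym hAB) h.
exact: kconn_trans hAB h.
Qed.

Lemma kconn_refl k A : kcopy e k A -> kconn e k A A.
Proof. by move=> hA; apply/and3P; split => //; apply: connect0. Qed.

Lemma subsets_conn k (T0 K1 K2 : {set T}) :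
  clique e T0 -> k < #|T0| -> K1 \subset T0 -> K2 \subset T0 ->
  #|K1| = k -> #|K2| = k -> connect (kstep e k) K1 K2.
Proof.
move=> cT hT s2 s3 h1 h2.
move Hd: #|K1 :\: K2| => d; elim: d K1 s2 h1 Hd => [|d IH] K1 s1 h1 Hd.
  have sub : K1 \subset K2 by rewrite -setD_eq0 -cards_eq0 Hd.
  have -> : K1 = K2 by apply/eqP; rewrite eqEcard sub h1 h2 leqnn.
  exact: connect0.
have [a] : exists a, a \in K1 :\: K2 by apply/set0Pn; rewrite -card_gt0 Hd.
rewrite inE => /andP [aK2 aK1].
have [b] : exists b, b \in K2 :\: K1.
  apply/set0Pn/negP; rewrite setD_eq0 => sub.
  have E : K2 = K1 by apply/eqP; rewrite eqEcard sub h1 h2 leqnn.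
  by move: aK2; rewrite E aK1.
rewrite inE => /andP [bK1 bK2].
have kp : 0 < k by rewrite -h1 card_gt0; apply/set0Pn; exists a.
have cKa : #|K1 :\ a| = k.-1 by move: (cardsD1 a K1); rewrite aK1 h1; lia.
have bKa : b \notin K1 :\ a by rewrite !inE (negbTE bK1) andbF.
set K1' := b |: (K1 :\ a).
have cK1' : #|K1'| = k by rewrite card_add // cKa; lia.
have bT : b \in T0 by apply: (subsetP s3).
have sK1' : K1' \subset T0.
  by rewrite subUset sub1set bT; apply: subset_trans s1; apply: subsetDl.
have st : kstep e k K1 K1'.
  apply/and3P; split.
  - by rewrite /kcopy h1 eqxx andbT; apply: clique_sub cT.
  - by rewrite /kcopy cK1' eqxx andbT; apply: clique_sub cT.
  apply/existsP; exists (b |: K1); apply/andP; split.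
    rewrite /kcopy card_add // h1 eqxx andbT; apply: clique_sub cT.
    by rewrite subUset sub1set bT.
  rewrite subUset subsetUr /= subUset sub1set !inE eqxx /=.
  by apply: subset_trans (subsetUr _ _); apply: subsetDl.
apply: connect_trans (connect1 st) _; apply: IH => //.
have -> : K1' :\: K2 = (K1 :\: K2) :\ a.
  apply/setP => x; rewrite !inE; case: (x =P b) => [->|_] /=.
    by rewrite bK2 !andbF.
  by rewrite andbCA.
by move: (cardsD1 a (K1 :\: K2)); rewrite Hd !inE aK2 aK1 /=; lia.
Qed.

Definition deg v := #|[set u | e v u]|.
Definition Nb (X : {set T}) := [set y | [forall x in X, e x y]].

Lemma bigmin_le_seq (I : eqType) (r : seq I) (P : pred I) (F : I -> nat) x0 j :
  j \in r -> P j -> \big[minn/x0]_(i <- r | P i) F i <= F j.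
Proof.
elim: r => // a r IH; rewrite inE big_cons => /orP [/eqP <-|jr] Pj.
  by rewrite Pj geq_minl.
case: (P a); last exact: IH.
by rewrite geq_min IH ?orbT.
Qed.

Lemma mindeg_le v : mindeg e <= deg v.
Proof.
rewrite /mindeg /mindeg_on.
have -> : deg v = #|[set u in [set: T] | e v u]|.
  by rewrite /deg; apply: eq_card => u; rewrite !inE.
by apply: bigmin_le_seq; rewrite ?mem_index_enum ?inE.
Qed.

Lemma mindeg_le_n : mindeg e <= #|T|.
Proof.
rewrite /mindeg /mindeg_on; apply: (big_ind (fun m => m <= #|T|)).
- by rewrite cardsT.
- by move=> x y hx hy; rewrite geq_min hx.
- by move=> i _; apply: max_card.
Qed.

Lemma mindeg_on_ge (U : {set T}) b :
  b <= #|U| -> (forall v, v \in U -> b <= #|[set u in U | e v u]|) ->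
  b <= mindeg_on e U.
Proof.
move=> h1 h2; rewrite /mindeg_on; apply: (big_ind (fun m => b <= m)) => //.
by move=> x y hx hy; rewrite leq_min hx hy.
Qed.

Lemma cardI_ge (A B : {set T}) : #|A| + #|B| <= #|A :&: B| + #|T|.
Proof. by rewrite -cardsUI addnC leq_add2l max_card. Qed.

Lemma nb_bound (X : {set T}) :
  #|T| + #|X| * mindeg e <= #|Nb X| + #|X| * #|T|.
Proof.
move Hm: #|X| => m; elim: m X Hm => [|m IH] X Hm.
  have -> : Nb X = [set: T].
    apply/setP => y; rewrite !inE; apply/forall_inP => x.
    by move/eqP: Hm; rewrite cards_eq0 => /eqP ->; rewrite inE.
  by rewrite cardsT !mul0n !addn0.
have [x xX] : exists x, x \in X by apply/set0Pn; rewrite -card_gt0 Hm.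
have Hm' : #|X :\ x| = m by move: (cardsD1 x X); rewrite xX Hm; lia.
have E : Nb X = Nb (X :\ x) :&: [set y | e x y].
  apply/setP => y; rewrite !inE; apply/forall_inP/andP.
    move=> h; split; last by apply: h.
    by apply/forall_inP => z; rewrite inE => /andP [_ zX]; apply: h.
  case=> /forall_inP h hx z zX; case: (z =P x) => [->|/eqP nz] //.
  by apply: h; rewrite !inE nz.
have := IH _ Hm'; have := cardI_ge (Nb (X :\ x)) [set y | e x y].
have := mindeg_le x; rewrite /deg -E mulSn mulSn.
have := mindeg_le_n; lia.
Qed.

Variable k : nat.
Hypothesis k_pos : 0 < k.
Hypothesis hdelta : (k - 1) * #|T| < k * mindeg e.

Lemma small_ext (T0 : {set T}) : #|T0| <= k -> exists v, v \in Nb T0.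
Proof.
move=> ht; apply/set0Pn; rewrite -card_gt0.
have h1 := nb_bound T0; have h2 := mindeg_le_n.
have h3 : #|T0| * mindeg e <= #|T0| * #|T| by rewrite leq_mul2l h2 orbT.
have h4 : #|T0| * (#|T| - mindeg e) <= k * (#|T| - mindeg e) by rewrite leq_mul2r ht orbT.
have h5 : k * mindeg e <= k * #|T| by rewrite leq_mul2l h2 orbT.
move: h4 hdelta; rewrite !mulnBr mulnBl mul1n; lia.
Qed.

Lemma big_clique (A : {set T}) : clique e A ->
  exists T0, [/\ clique e T0, A \subset T0, k < #|T0| &
     forall v, #|[set p in T0 | e v p]| < #|T0|].
Proof.
move=> cA.
have P0 : (fun X => clique e X && (A \subset X)) A by rewrite /= cA subxx.
case: (@arg_maxnP _ A (fun X : {set T} => clique e X && (A \subset X)) (fun X => #|X|) P0) => T0 /andP [cT sAT] Hmax.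
have Hmax' : forall X, clique e X -> A \subset X -> #|X| <= #|T0|.
  by move=> X cX sX; apply: Hmax; rewrite cX sX.
exists T0; split => //.
  rewrite ltnNge; apply/negP => /small_ext [v]; rewrite inE => /forall_inP hv.
  have vT : v \notin T0 by apply: notin_adj => a aT; rewrite e_sym; apply: hv.
  have : #|v |: T0| <= #|T0|; last by rewrite card_add // ltnn.
  apply: Hmax'; last by apply: subset_trans sAT (subsetUr _ _).
  by apply: clique_add => // a aT; rewrite e_sym; apply: hv.
move=> v; rewrite ltn_neqAle; apply/andP; split; last first.
  by apply: subset_leq_card; apply/subsetP => p; rewrite inE => /andP [].
apply/negP => /eqP hc.
have hall : forall p, p \in T0 -> e v p.
  move=> p pT; have : [set p in T0 | e v p] = T0.
    apply/eqP; rewrite eqEcard hc leqnn andbT.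
    by apply/subsetP => q; rewrite inE => /andP [].
  by move=> /setP /(_ p); rewrite !inE pT /= => ->.
have vT : v \notin T0 by apply: notin_adj.
have : #|v |: T0| <= #|T0|; last by rewrite card_add // ltnn.
apply: Hmax'; last by apply: subset_trans sAT (subsetUr _ _).
by apply: clique_add.
Qed.

Lemma card_sum (P : pred T) : #|[set u | P u]| = \sum_u (P u : nat).
Proof.
rewrite -sum1_card big_mkcond /=; apply: eq_bigr => u _; rewrite inE.
by case: (P u).
Qed.

Lemma double_count (T0 : {set T}) :
  \sum_(p in T0) deg p = \sum_v #|[set p in T0 | e v p]|.
Proof.
rewrite /deg; under eq_bigr => p _ do rewrite card_sum.
rewrite exchange_big /=; apply: eq_bigr => v _.
rewrite (card_sum (fun p => (p \in T0) && e v p)) big_mkcond /=.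
by apply: eq_bigr => p _; rewrite e_sym; case: (p \in T0).
Qed.

Lemma part1 C : is_component e k C -> mindeg e < #|cverts C|.
Proof.
case/existsP => A /andP [hA /eqP hC].
have cA : clique e A by case/andP: hA.
have cardA : #|A| = k by case/andP: hA => _ /eqP.
have [T0 [cT sAT hT hmax]] := big_clique cA.
set W := cverts C.
have memC : forall B, (B \in C) = kconn e k A B by move=> B; rewrite hC inE.
have Wout : forall v, v \notin W -> #|[set p in T0 | e v p]| <= k - 1.
  move=> v vW; rewrite leqNgt; apply/negP => hk.
  have hk' : k <= #|[set p in T0 | e v p]| by lia.
  have [K [_ sK cK]] := exists_sub (m := k) (sub0set [set p in T0 | e v p]) (ltac:(by rewrite cards0)) hk'.

  have KT : K \subset T0.
    by apply/subsetP => p /(subsetP sK); rewrite inE => /andP [].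
  have adjK : forall a, a \in K -> e v a.
    by move=> a /(subsetP sK); rewrite inE => /andP [].
  have kK : kcopy e k K by rewrite /kcopy cK eqxx andbT; apply: clique_sub cT.
  have AK : kconn e k A K.
    by apply/and3P; split => //; apply: subsets_conn cT hT sAT KT cardA cK.
  have vK : v \notin K by apply: notin_adj.
  have cD : clique e (v |: K) by apply: clique_add => //; case/andP: kK.
  have cardD : #|v |: K| = k.+1 by rewrite card_add // cK.
  have s1D : [set v] \subset v |: K by rewrite sub1set setU11.
  have [K' [s1 s2 c2]] := exists_sub (m := k) s1D (ltac:(by rewrite cards1)) (ltac:(by rewrite cardD)).
  have kK' : kcopy e k K' by rewrite /kcopy c2 eqxx andbT; apply: clique_sub cD.
  have st : kstep e k K K'.
    apply/and3P; split => //; apply/existsP; exists (v |: K).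
    by rewrite /kcopy cD cardD eqxx /= subUset s2 subsetUr.
  have K'C : K' \in C by rewrite memC; apply: kconn_step AK st.
  move: vW; rewrite /W /cverts; move/bigcupP; apply; exists K' => //.
  by move: s1; rewrite sub1set.
have Hlow : #|T0| * mindeg e <= \sum_(p in T0) deg p.
  by rewrite -sum_nat_const; apply: leq_sum => p _; apply: mindeg_le.
have Hup : \sum_v #|[set p in T0 | e v p]| <=
           \sum_v ((k - 1) + (if v \in W then #|T0| - k else 0)).
  apply: leq_sum => v _; case: (boolP (v \in W)) => vW.
    by have := hmax v; lia.
  by rewrite addn0; apply: Wout.
have Hs2 : \sum_(v : T) ((k - 1) + (if v \in W then #|T0| - k else 0)) =
            #|T| * (k - 1) + #|W| * (#|T0| - k).
  by rewrite big_split /= sum_nat_const -big_mkcond /= sum_nat_const.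
rewrite Hs2 -double_count in Hup.
rewrite ltnNge; apply/negP => hW.
have h1 : #|W| * (#|T0| - k) <= mindeg e * (#|T0| - k) by rewrite leq_mul2r hW orbT.
have h2 : #|T0| * mindeg e = k * mindeg e + (#|T0| - k) * mindeg e.
  by rewrite -mulnDl subnKC // ltnW.
move: hdelta; rewrite (mulnC (k - 1)); lia.
Qed.

Lemma ext_comp C (A : {set T}) x : x \in ext e k C -> kcopy e k A -> x \in A ->
  [set B | kconn e k A B] = C.
Proof.
rewrite inE => /andP [_ /forallP H] hA xA.
have := H [set B | kconn e k A B]; apply: contraTeq => ne.
rewrite ne andbT negb_imply negbK; apply/andP; split.
  by apply/existsP; exists A; rewrite hA eqxx.
by apply/bigcupP; exists A => //; rewrite inE kconn_refl.
Qed.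

Lemma part2 C C' : is_component e k C -> is_component e k C' -> C != C' ->
  forall x y, x \in ext e k C -> y \in ext e k C' -> ~~ e x y.
Proof.
move=> _ _ neC x y xC yC'; apply/negP => exy.
have cxy : clique e (x |: [set y]).
  apply: clique_add => [|a]; last by rewrite inE => /eqP ->.
  by apply/cliqueP => a b; rewrite !inE => /eqP -> /eqP ->; rewrite eqxx.
have [T0 [cT sT hT _]] := big_clique cxy.
have xT : [set x] \subset T0 by apply: subset_trans sT; rewrite sub1set setU11.
have yT : [set y] \subset T0.
  by apply: subset_trans sT; rewrite sub1set !inE eqxx orbT.
have [Ax [s1 s2 c2]] := exists_sub (m := k) xT (ltac:(by rewrite cards1)) (ltnW hT).
have [Ay [s3 s4 c4]] := exists_sub (m := k) yT (ltac:(by rewrite cards1)) (ltnW hT).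
have kAx : kcopy e k Ax by rewrite /kcopy c2 eqxx andbT; apply: clique_sub cT.
have kAy : kcopy e k Ay by rewrite /kcopy c4 eqxx andbT; apply: clique_sub cT.
have E1 := ext_comp xC kAx (ltac:(by move: s1; rewrite sub1set)).
have E2 := ext_comp yC' kAy (ltac:(by move: s3; rewrite sub1set)).
have hxy : kconn e k Ax Ay.
  by apply/and3P; split => //; apply: subsets_conn cT hT s2 s4 c2 c4.
by move: neC; rewrite -E1 -E2 (comp_eq hxy) eqxx.
Qed.

Lemma part3 (C : {set {set T}}) (S : {set T}) :
  is_component e k C -> kcopy e (k - 1) S ->
  (exists v, v |: S \in C) ->
  let U := [set v | v |: S \in C] in
  k * mindeg e <= mindeg_on e U + (k - 1) * #|T| /\
  k * mindeg e + 1 <= #|U| + (k - 1) * #|T|.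
Proof.
case/existsP => A /andP [hA /eqP hC] hS [v0 hv0] U.
have memC : forall B, (B \in C) = kconn e k A B by move=> B; rewrite hC inE.
have cS : clique e S by case/andP: hS.
have cardS : #|S| = k - 1 by case/andP: hS => _ /eqP.
have kcopyC : forall B, B \in C -> kcopy e k B by move=> B; rewrite memC => /and3P [].
have key : forall w, w \in U ->
    #|T| + k * mindeg e <= #|[set u in U | e w u]| + k * #|T| /\
    #|[set u in U | e w u]| < #|U|.
  move=> w; rewrite inE => wU.
  have kw := kcopyC _ wU.
  have cw : clique e (w |: S) by case/andP: kw.
  have cardw : #|w |: S| = k by case/andP: kw => _ /eqP.
  have sub : Nb (w |: S) \subset [set u in U | e w u].
    apply/subsetP => y; rewrite /Nb [y \in [set _ | _]]inE => /forall_inP hy.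
    have ewy : e w y by apply: hy; rewrite !inE eqxx.
    have adjS : forall a, a \in S -> e y a.
      by move=> a aS; rewrite e_sym; apply: hy; rewrite inE aS orbT.
    have yS : y \notin S by apply: notin_adj.
    have adjw : forall a, a \in w |: S -> e y a by move=> a aS; rewrite e_sym; apply: hy.
    have yw : y \notin w |: S by apply: notin_adj.
    have ky : kcopy e k (y |: S).
      rewrite /kcopy card_add // cardS; apply/andP; split; first exact: clique_add.
      by apply/eqP; lia.
    have st : kstep e k (w |: S) (y |: S).
      apply/and3P; split => //; apply/existsP; exists (y |: (w |: S)).
      rewrite /kcopy card_add // cardw eqxx andbT clique_add //=.
      rewrite subUset subsetUr /= subUset sub1set setU11 /=.
      by apply: subset_trans (subsetUr _ _) (subsetUr _ _).
    rewrite inE ewy andbT; rewrite ?inE memC; apply: kconn_step st; by rewrite -memC.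
  split.
    have := nb_bound (w |: S); rewrite cardw => h.
    by have := subset_leq_card sub; lia.
  have wU' : w \in U by rewrite inE.
  rewrite (cardsD1 w U) wU' add1n ltnS; apply: subset_leq_card.
  by apply/subsetP => u; rewrite !inE => /andP [uU ewu]; rewrite uU andbT; apply/eqP => uw; move: ewu; rewrite uw e_irr.
have v0U : v0 \in U by rewrite inE.
have emul : (k - 1) * #|T| + #|T| = k * #|T|.
  by rewrite -[in RHS](subnK k_pos) mulnDl mul1n.
have [h1 h2] := key v0 v0U.
split; last by lia.
have : k * mindeg e - (k - 1) * #|T| <= mindeg_on e U; last by lia.
apply: mindeg_on_ge; first by lia.
by move=> v vU; have [h3 _] := key v vU; lia.
Qed.
End Aux.

Theorem lemma6p1 (T : finType) (e : rel T) (k : nat)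
  (e_sym : symmetric e) (e_irr : irreflexive e)
  (k_pos : 0 < k)
  (hdelta : (k - 1) * #|T| < k * mindeg e) :
  (* (i) *)
  (forall C : {set {set T}}, is_component e k C ->
     mindeg e < #|cverts C|) /\
  (* (ii) *)
  (forall C C' : {set {set T}}, is_component e k C -> is_component e k C' ->
     C != C' ->
     forall x y, x \in ext e k C -> y \in ext e k C' -> ~~ e x y) /\
  (* (iii) *)
  (forall (C : {set {set T}}) (S : {set T}),
     is_component e k C -> kcopy e (k - 1) S ->
     (exists v, v |: S \in C) ->
     let U := [set v | v |: S \in C] in
     k * mindeg e <= mindeg_on e U + (k - 1) * #|T| /\
     k * mindeg e + 1 <= #|U| + (k - 1) * #|T|).
Proof.
split; first by move=> C hC; exact: (part1 e_sym e_irr k_pos hdelta hC).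
split; first by move=> C C' hC hC' ne; exact: (part2 e_sym e_irr k_pos hdelta hC hC' ne).
by move=> C S hC hS hex; exact: (part3 e_sym e_irr k_pos hdelta hC hS hex).
Qed.
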